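(* Let $q\ge3$ be an integer and $\beta>0$ with $2\pi^2-\beta\pi^2+\beta q^2\sin^2(\frac{\pi}{q})\ne0$. Put $$c_1=\frac{4\beta\pi\sin^2(\frac{\pi}{q})}{2\pi^2-\beta\pi^2+\beta q^2\sin^2(\frac{\pi}{q})},\qquad c_2=\frac{2\beta q\sin^2(\frac{\pi}{q})}{2\pi^2-\beta\pi^2+\beta q^2\sin^2(\frac{\pi}{q})},$$ and let $\tilde M$ be the $q\times q$ matrix with entries ($i,j\in\{1,\dots,q\}$, index differences mod $q$) $$\tilde M(i,j)=\frac{q}{2\pi}\Big(\delta_{j=i-1}-\delta_{j=i}+c_1\sin\big(\tfrac{2\pi}{q}(i-j)\big)+c_2\big[\cos\big(\tfrac{2\pi}{q}(i-j)\big)-\cos\big(\tfrac{2\pi}{q}(i-j-1)\big)\big]\Big).$$ Then the eigenvalues of $\tilde M$ are $\lambda_1=\frac{q}{2\pi}\Big(\big(c_2\tfrac q2-1\big)\big(1-\cos\tfrac{2\pi}{q}\big)+i\big[\big(c_2\tfrac q2-1\big)\sin\tfrac{2\pi}{q}-c_1\tfrac q2\big]\Big)$, $\lambda_{q-1}=\overline{\lambda_1}$, $\lambda_j=\frac{q}{2\pi}\Big(\big[\cos\tfrac{2\pi j}{q}-1\big]-i\sin\tfrac{2\pi j}{q}\Big)$ for $j\in\{2,\dots,q-2\}$, and $\lambda_q=0$. *)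

(* Defs.v *)
From HB Require Import structures.
From mathcomp Require Import all_boot all_order all_algebra.
From mathcomp Require Import all_classical all_reals all_analysis.
From mathcomp Require Import complex.
Set Implicit Arguments. Unset Strict Implicit. Unset Printing Implicit Defensive.
Import Order.TTheory GRing.Theory Num.Theory.
Local Open Scope ring_scope.

Section Defs.
Variables (R : realType) (q : nat) (beta : R).

Definition den : R :=
  2 * pi ^+ 2 - beta * pi ^+ 2 + beta * (q%:R) ^+ 2 * (sin (pi / q%:R)) ^+ 2.

Definition c1 : R := 4 * beta * pi * (sin (pi / q%:R)) ^+ 2 / den.
Definition c2 : R := 2 * beta * q%:R * (sin (pi / q%:R)) ^+ 2 / den.

(* Matrix Mtilde with 0-based indices i, j : 'I_q (paper: 1..q; only
   differences mod q matter).  delta_{j = i-1 mod q} is (j+1) mod q == i. *)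
Definition Mtilde : 'M[R]_q :=
  \matrix_(i < q, j < q)
    (q%:R / (2 * pi) *
     ( (((j.+1 %% q)%N == i)%:R) - ((j == i)%:R)
       + c1 * sin (2 * pi / q%:R * (i%:R - j%:R))
       + c2 * ( cos (2 * pi / q%:R * (i%:R - j%:R))
              - cos (2 * pi / q%:R * (i%:R - j%:R - 1)) ) )).

Definition re1 : R :=
  q%:R / (2 * pi) * ((c2 * q%:R / 2 - 1) * (1 - cos (2 * pi / q%:R))).
Definition im1 : R :=
  q%:R / (2 * pi) * ((c2 * q%:R / 2 - 1) * sin (2 * pi / q%:R) - c1 * q%:R / 2).

Definition lam (j : nat) : R[i] :=
  if j == 1%N then Complex re1 im1
  else if j == q.-1 then Complex re1 (- im1)
  else if j == q then 0
  else Complex (q%:R / (2 * pi) * (cos (2 * pi * j%:R / q%:R) - 1))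
               (q%:R / (2 * pi) * (- sin (2 * pi * j%:R / q%:R))).
End Defs.

(* Main.v *)
Require Import Defs.
From HB Require Import structures.
From mathcomp Require Import all_boot all_order all_algebra.
From mathcomp Require Import all_classical all_reals all_analysis.
From mathcomp Require Import complex.
From mathcomp Require Import ring lra zify.
Import Order.TTheory GRing.Theory Num.Theory.
Local Open Scope ring_scope.

Lemma char_sim (K : comNzRingType) n (A P Q : 'M[K]_n) :
  Q *m P = 1%:M -> char_poly (Q *m A *m P) = char_poly A.
Proof.
move=> QP.
have hQP : map_mx polyC Q *m map_mx polyC P = 1%:M.
  by rewrite -map_mxM QP map_mx1.
rewrite /char_poly /char_poly_mx !map_mxM.
have eX : ('X%:M : 'M[{poly K}]_n) = map_mx polyC Q *m 'X%:M *m map_mx polyC P.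
  by rewrite scalar_mxC -mulmxA hQP mulmx1.
rewrite [in LHS]eX -mulmxBl -mulmxBr !det_mulmx mulrAC -det_mulmx hQP det1 mul1r.
by [].
Qed.

Lemma prod_reindex (T : comNzRingType) (n : nat) (g : nat -> T) : (0 < n)%N ->
  \prod_(i < n) g (if (i == 0 :> nat) then n else i) = \prod_(1 <= j < n.+1) g j.
Proof.
case: n => [//|k] _.
rewrite big_ord_recl /= big_nat_recr //= mulrC; congr (_ * _).
rewrite big_add1 /= big_mkord; apply: eq_bigr => i _.
by rewrite /bump add1n.
Qed.

Section Circ.
Variable R : realType.
Variable q : nat.
Hypothesis hq : (3 <= q)%N.
Variable beta : R.

Definition ee (x : R) : R[i] := Complex (cos x) (sin x).
Lemma eeD x y : ee (x + y) = ee x * ee y.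
Proof. rewrite /ee; simpc. rewrite sinD cosD; congr Complex; ring. Qed.
Lemma ee0 : ee 0 = 1. Proof. by rewrite /ee sin0 cos0. Qed.

Definition th : R := 2 * pi / q%:R.
Definition om : R[i] := ee th.

Lemma q0 : (q%:R : R) != 0. Proof. rewrite pnatr_eq0; lia. Qed.

Lemma omX n : om ^+ n = ee (th * n%:R).
Proof.
elim: n => [|n IH]; first by rewrite expr0 mulr0 ee0.
by rewrite exprS IH /om -eeD -natr1 mulrDr mulr1 addrC.
Qed.

Lemma omq : om ^+ q = 1.
Proof.
rewrite omX /th divfK ?q0 // /ee.
have -> : (2 * pi : R) = pi *+ 2 by rewrite mulr_natl.
by rewrite cos2pi sin2pi.
Qed.

Lemma om_mod n : om ^+ n = om ^+ (n %% q).
Proof. by rewrite {1}(divn_eq n q) exprD mulnC exprM omq expr1n mul1r. Qed.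

Lemma om_neq1 r : (0 < r < q)%N -> om ^+ r != 1.
Proof.
move=> /andP [r0 rq]; rewrite omX /ee; apply/negP => /eqP [hc hs].
pose y : R := pi * r%:R / q%:R.
have hy : th * r%:R = y *+ 2 by rewrite /th /y mulr2n; field; rewrite q0.
have ypos : 0 < y < pi.
  have qpos : (0 : R) < q%:R by rewrite ltr0n; lia.
  have rq' : (r%:R : R) < q%:R by rewrite ltr_nat.
  have r0' : (0 : R) < r%:R by rewrite ltr0n.
  have pi0 := pi_gt0 R.
  apply/andP; split; first by rewrite /y divr_gt0 // mulr_gt0.
  rewrite /y ltr_pdivrMr // ltr_pM2l //.
have := sin_gt0_pi ypos.
move: hc; rewrite hy cos_mulr2n cos2sin2 => hc.
have : sin y ^+ 2 = 0 by lra.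
by move/eqP; rewrite expf_eq0 /= => /eqP ->; rewrite ltxx.
Qed.

Definition S n : R[i] := \sum_(j < q) (om ^+ n) ^+ j.

Lemma SE n : S n = if (q %| n)%N then q%:R else 0.
Proof.
rewrite /S; case: ifP => hd.
  have -> : om ^+ n = 1 by rewrite om_mod; move/eqP: hd => ->.
  by rewrite (eq_bigr (fun _ => 1)) ?sumr_const ?card_ord // => j _; rewrite expr1n.
have hz : om ^+ n != 1.
  rewrite om_mod om_neq1 //; apply/andP; split; last by rewrite ltn_mod; lia.
  by rewrite lt0n; apply/negP => /eqP h; move: hd; rewrite /dvdn h.
have : (om ^+ n - 1) * \sum_(j < q) (om ^+ n) ^+ j = 0.
  by rewrite -subrX1 exprAC omq expr1n subrr.
by move/eqP; rewrite mulf_eq0 subr_eq0 (negbTE hz) /= => /eqP.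
Qed.

Definition Fm : 'M[R[i]]_q := \matrix_(i < q, m < q) om ^+ (i * m).
Definition Gm : 'M[R[i]]_q := \matrix_(m < q, k < q) om ^+ ((q - k) * m).

Lemma dvd_ik (i k : 'I_q) : (q %| i + (q - k))%N = (i == k).
Proof.
case: eqP => [->|hik].
  by rewrite subnKC ?dvdnn // ltnW.
apply/negP => /dvdnP [c hc].
have hi := ltn_ord i; have hk := ltn_ord k.
have hik' : (i : nat) <> k by move=> h; apply: hik; apply: val_inj.
case: c hc => [|[|c]] hc; lia.
Qed.

Lemma FG : Fm *m Gm = (q%:R : R[i])%:M.
Proof.
apply/matrixP => i k; rewrite !mxE.
under eq_bigr => m _ do rewrite !mxE -exprD -mulnDl exprM.
by rewrite -/(S _) SE dvd_ik; case: eqP.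
Qed.

Lemma Funit : Fm \in unitmx.
Proof.
have h : Fm *m ((q%:R : R[i])^-1 *: Gm) = 1%:M.
  rewrite -scalemxAr FG scale_scalar_mx mulVf //.
  by rewrite pnatr_eq0; lia.
by case: (mulmx1_unit h).
Qed.

Lemma sinC x : Complex (sin x) 0 = Complex 0 (-(2^-1)) * (ee x - ee (-x)).
Proof. rewrite /ee sinN cosN; simpc; congr Complex; by field. Qed.
Lemma cosC x : Complex (cos x) 0 = Complex (2^-1) 0 * (ee x + ee (-x)).
Proof. rewrite /ee sinN cosN; simpc; congr Complex; by field. Qed.

Lemma omN n : om ^+ ((q - 1) * n) = ee (- (th * n%:R)).
Proof.
have h1 : om ^+ ((q - 1) * n) * om ^+ n = 1.
  rewrite -exprD -{2}(mul1n n) -mulnDl subnK; last by lia.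
  by rewrite exprM omq expr1n.
have h2 : ee (- (th * n%:R)) * om ^+ n = 1 by rewrite omX -eeD addNr ee0.
apply: (mulIf (x := om ^+ n)); last by rewrite h1 h2.
by apply/eqP => h0; move: h2; rewrite h0 mulr0 => /eqP; rewrite eq_sym oner_eq0.
Qed.


Definition aa : R := q%:R / (2 * pi).
Definition hh : R[i] := Complex 0 (-(2^-1)).
Definition tt : R[i] := Complex (2^-1) 0.
Definition AA (i j : nat) := om ^+ i * om ^+ ((q - 1) * j).
Definition BB (i j : nat) := om ^+ ((q - 1) * i) * om ^+ j.

Lemma AAE i j : AA i j = ee (th * (i%:R - j%:R)).
Proof. by rewrite /AA omX omN -eeD mulrBr. Qed.
Lemma BBE i j : BB i j = ee (- (th * (i%:R - j%:R))).
Proof. by rewrite /BB omN omX -eeD; congr ee; ring. Qed.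
Lemma AA1 i j : om ^+ (q - 1) * AA i j = ee (th * (i%:R - j%:R - 1)).
Proof. by rewrite -{1}(muln1 (q - 1)%N) omN AAE -eeD; congr ee; ring. Qed.
Lemma BB1 i j : om * BB i j = ee (- (th * (i%:R - j%:R - 1))).
Proof. by rewrite -{1}(expr1 om) omX BBE -eeD; congr ee; ring. Qed.

Local Open Scope complex_scope.
Lemma McE (i j : 'I_q) : Complex (Mtilde q beta i j) 0 =
  aa%:C * (((((j.+1 %% q)%N == i)%:R : R)%:C - ((j == i)%:R : R)%:C
   + (c1 q beta)%:C * (hh * (AA i j - BB i j))
   + (c2 q beta)%:C * (tt * (AA i j + BB i j)
                       - tt * (om ^+ (q - 1) * AA i j + om * BB i j))))%C.
Proof.
rewrite AA1 BB1 AAE BBE /hh /tt -sinC -cosC -cosC mxE /aa /th.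
rewrite /real_complex_def; simpc; congr Complex; ring.
Qed.


Lemma sumA (i m : nat) :
  \sum_(j < q) AA i j * om ^+ (j * m) = om ^+ i * S (q - 1 + m).
Proof.
rewrite /S mulr_sumr; apply: eq_bigr => j _; rewrite /AA -mulrA; congr (_ * _).
by rewrite -exprD -exprM mulnDl (mulnC j m).
Qed.

Lemma sumB (i m : nat) :
  \sum_(j < q) BB i j * om ^+ (j * m) = om ^+ ((q - 1) * i) * S (1 + m).
Proof.
rewrite /S mulr_sumr; apply: eq_bigr => j _; rewrite /BB -mulrA; congr (_ * _).
by rewrite -exprD -exprM mulnDl mul1n (mulnC j m).
Qed.

Lemma sumD0 (i : 'I_q) m :
  \sum_(j < q) ((j == i)%:R : R)%:C * om ^+ (j * m) = om ^+ (i * m).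
Proof.
rewrite (bigD1 i) //= eqxx big1 ?addr0; first by rewrite rmorph1 mul1r.
by move=> j /negbTE ->; rewrite rmorph0 mul0r.
Qed.

Lemma q_pos : (0 < q)%N. Proof. lia. Qed.

Lemma sumD1 (i : 'I_q) m :
  \sum_(j < q) ((((j.+1 %% q)%N == i)%:R : R))%:C * om ^+ (j * m)
  = om ^+ (i * m) * om ^+ ((q - 1) * m).
Proof.
have hi := ltn_ord i.
pose k0 := ((i + q - 1) %% q)%N.
pose j0 : 'I_q := Ordinal (ltn_pmod (i + q - 1) q_pos).
have hj0 : ((k0 + 1) %% q = i)%N.
  rewrite /k0 modnDml.
  have -> : (i + q - 1 + 1 = i + q)%N by lia.
  rewrite modnDr; exact: modn_small.
have hinj (j : 'I_q) : ((j.+1 %% q)%N == i) = (j == j0).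
  have hj := ltn_ord j.
  rewrite -hj0 -addn1 eqn_modDr (modn_small hj) (modn_small (ltn_pmod _ q_pos)).
  by [].
rewrite (eq_bigr (fun j : 'I_q => ((j == j0)%:R : R)%:C * om ^+ (j * m))); last first.
  by move=> j _; rewrite hinj.
rewrite sumD0 [LHS]om_mod.
have -> : (j0 * m %% q = (i + (q - 1)) * m %% q)%N.
  rewrite /j0 /= modnMml; congr (_ * _ %% _)%N; lia.
by rewrite -om_mod mulnDl exprD.
Qed.



Lemma dvdA (m : 'I_q) : (q %| q - 1 + m)%N = (m == 1%N :> nat).
Proof.
have hm := ltn_ord m.
case: eqP => [->|h]; first by rewrite subnK ?dvdnn //; lia.
apply/negP => /dvdnP [c hc]; case: c hc => [|[|c]] hc; lia.
Qed.

Lemma dvdB (m : 'I_q) : (q %| 1 + m)%N = (m == q.-1 :> nat).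
Proof.
have hm := ltn_ord m.
case: eqP => [->|h]; first by rewrite add1n prednK ?dvdnn //; lia.
apply/negP => /dvdnP [c hc]; case: c hc => [|[|c]] hc; lia.
Qed.

Definition Mc := map_mx (fun x : R => Complex x 0) (Mtilde q beta).
Definition alpha := aa%:C * ((c1 q beta)%:C * hh + (c2 q beta)%:C * tt
   - (c2 q beta)%:C * tt * om ^+ (q - 1)).
Definition betap := aa%:C * (- ((c1 q beta)%:C * hh) + (c2 q beta)%:C * tt
   - (c2 q beta)%:C * tt * om).

Lemma MFE (i m : 'I_q) : (Mc *m Fm) i m =
  aa%:C * (om ^+ (i * m) * om ^+ ((q - 1) * m)) - aa%:C * om ^+ (i * m)
  + alpha * (om ^+ i * S (q - 1 + m)) + betap * (om ^+ ((q - 1) * i) * S (1 + m)).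
Proof.
rewrite mxE.
rewrite (eq_bigr (fun j : 'I_q =>
   aa%:C * ((((j.+1 %% q)%N == i)%:R : R)%:C * om ^+ (j * m))
 - aa%:C * (((j == i)%:R : R)%:C * om ^+ (j * m))
 + alpha * (AA i j * om ^+ (j * m)) + betap * (BB i j * om ^+ (j * m)))); last first.
  move=> j _; rewrite [Mc i j]mxE [Fm j m]mxE McE /alpha /betap; ring.
rewrite !big_split /= sumrN -!mulr_sumr sumD1 sumD0 sumA sumB.
by [].
Qed.


Lemma omq1 : om ^+ (q - 1) = ee (- th).
Proof. by rewrite -(muln1 (q - 1)%N) omN mulr1. Qed.

Lemma natC n : (n%:R : R[i]) = Complex n%:R 0.
Proof. by rewrite -(rmorph_nat (real_complex R)). Qed.

Lemma K1 : aa%:C * ee (- th) - aa%:C + alpha * q%:R = Complex (re1 q beta) (im1 q beta).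
Proof.
rewrite /alpha omq1 natC /hh /tt /ee /real_complex_def cosN sinN /re1 /im1 /aa /th.
simpc; congr Complex; ring.
Qed.

Lemma K2 : aa%:C * om - aa%:C + betap * q%:R = Complex (re1 q beta) (- im1 q beta).
Proof.
rewrite /betap /om natC /hh /tt /ee /real_complex_def /re1 /im1 /aa /th.
simpc; congr Complex; ring.
Qed.

Lemma K3 (m : nat) : aa%:C * ee (- (th * m%:R)) - aa%:C =
  Complex (q%:R / (2 * pi) * (cos (2 * pi * m%:R / q%:R) - 1))
          (q%:R / (2 * pi) * (- sin (2 * pi * m%:R / q%:R))).
Proof.
have -> : (2 * pi * m%:R / q%:R : R) = th * m%:R by rewrite /th; ring.
rewrite /ee /real_complex_def /aa cosN sinN.
simpc; congr Complex; ring.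
Qed.


Definition mu (m : 'I_q) : R[i] := lam q beta (if (m == 0 :> nat) then q else m).

Lemma MFD (i m : 'I_q) : (Mc *m Fm) i m = om ^+ (i * m) * mu m.
Proof.
have hm := ltn_ord m.
rewrite MFE !SE dvdA dvdB /mu.
case: (m =P 1%N :> nat) => [m1|m1].
  have -> : (m == q.-1 :> nat) = false by apply/eqP; lia.
  rewrite m1 /= !muln1 omq1.
  have -> : lam q beta 1 = Complex (re1 q beta) (im1 q beta) by [].
  rewrite -K1; ring.
case: (m =P q.-1 :> nat) => [mq|mq].
  have -> : (m == 0%N :> nat) = false by apply/eqP; lia.
  have -> : lam q beta m = Complex (re1 q beta) (- im1 q beta).
    rewrite /lam mq ifF ?eqxx //; apply/eqP; lia.
  have -> : om ^+ ((q - 1) * m) = om.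
    rewrite om_mod mq.
    have [k hk] : exists k, q = k.+3 by exists (q - 3)%N; lia.
    have -> : ((q - 1) * q.-1 = (q - 2) * q + 1)%N by rewrite hk; nia.
    by rewrite modnMDl modn_small ?expr1 //; lia.
  have -> : (i * m = (q - 1) * i)%N by rewrite mq mulnC subn1.
  rewrite -K2; ring.
case: (m =P 0%N :> nat) => [m0|m0].
  have -> : lam q beta q = 0.
    rewrite /lam ifF; last by apply/eqP; lia.
    by rewrite ifF ?eqxx //; apply/eqP; lia.
  rewrite m0 !muln0 !expr0; ring.
have -> : lam q beta m = Complex (q%:R / (2 * pi) * (cos (2 * pi * m%:R / q%:R) - 1))
          (q%:R / (2 * pi) * (- sin (2 * pi * m%:R / q%:R))).
  rewrite /lam ifF; last by apply/eqP.
  rewrite ifF; last by apply/eqP.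
  by rewrite ifF //; apply/eqP; lia.
rewrite omN -K3; ring.
Qed.


Lemma main_circ : char_poly Mc = \prod_(1 <= j < q.+1) ('X - (lam q beta j)%:P).
Proof.
pose D := diag_mx (\row_m mu m).
have MF : Mc *m Fm = Fm *m D.
  by apply/matrixP => i m; rewrite MFD mul_mx_diag !mxE.
rewrite -(@char_sim _ _ Mc Fm (invmx Fm)); last by rewrite mulVmx ?Funit.
rewrite -mulmxA MF mulmxA mulVmx ?Funit // mul1mx.
rewrite char_poly_trig ?diag_mx_is_trig //.
rewrite (eq_bigr (fun i : 'I_q => 'X - (mu i)%:P)); last first.
  by move=> i _; rewrite !mxE eqxx mulr1n.
rewrite /mu; exact: (@prod_reindex _ q (fun j => 'X - (lam q beta j)%:P) q_pos).
Qed.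

End Circ.

Theorem lemma3p2 (R : realType) (q : nat) (beta : R)
  (hq : (3 <= q)%N) (hbeta : 0 < beta) (hden : den q beta != 0) :
  char_poly (map_mx (fun x : R => Complex x 0) (Mtilde q beta))
  = \prod_(1 <= j < q.+1) ('X - (lam q beta j)%:P).
Proof. exact: (@main_circ R q hq beta). Qed.
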